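(* Let $n\ge 1$ and consider system (S) below associated with a 3-SAT instance on $n$ variables. If $(x,\gamma,\Delta,y,d,s)$ is feasible for (S), then $$|x_j| \ \ge\ 1-\frac{12}{n^5}-\frac{2^{-2^n}}{n^5}\qquad\text{for all } 1\le j\le 2n.$$
   Context: Let $h(y) := 2y_1^3 + y_2^3 - 6y_1y_2 + 4$ and $R_\gamma := [1.259-\gamma,1.26]\times[1.587,1.59]$. Let $D\subseteq\mathbb{R}\times\mathbb{R}^n$ be the set of $(s,d)$ with $0\le d_1\le\frac12$, $0\le d_k\le d_{k-1}^2$ ($k=2,\dots,n$), $0\le s\le d_n^2$. A 3-SAT instance consists of Boolean variables $w_1,\dots,w_n$ and clauses $C_1,\dots,C_m$, each a disjunction of three literals (a literal is some $w_j$ or its negation $\bar w_j$). To the literal $w_j$ associate the real variable $x_j$ and to $\bar w_j$ the real variable $x_{n+j}$. For clause $C_i$ denote by $x_{i_1},x_{i_2},x_{i_3}$ the variables associated with its three literals. System (S) has variables $x\in\mathbb{R}^{2n}$, $\gamma,\Delta,s\in\mathbb{R}$, $y\in\mathbb{R}^2$, $d\in\mathbb{R}^n$, and constraints: $-1\le x_j\le 1$ for $j\in[2n]$; $x_j+x_{n+j}=0$ for $j\in[n]$; $x_{i_1}+x_{i_2}+x_{i_3}\ge -1-\Delta$ for each clause $C_i$; $\gamma\ge 0$, $0\le\Delta\le 2$, $\Delta+\gamma/2\le 2$; $y\in R_\gamma$; $(s,d)\in D$; and $-n^5\sum_{j=1}^n x_j^2 + h(y) - s\le -n^6$. *)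

(* Defs.v *)
(* concrete reals R. Indices are 0-based:
   x j for j < 2n stands for x_{j+1}; d k for k < n stands for d_{k+1}. *)
From Stdlib Require Import Reals Lra Lia List.
Open Scope R_scope.

(* A literal: Boolean variable w_{lvar+1} (lvar < n), negated if lneg = true. *)
Record literal := mkLit { lvar : nat; lneg : bool }.
Definition clause := (literal * literal * literal)%type.

Definition lit_ok (n : nat) (l : literal) : Prop := (lvar l < n)%nat.
Definition clause_ok (n : nat) (c : clause) : Prop :=
  let '(a, b, e) := c in lit_ok n a /\ lit_ok n b /\ lit_ok n e.

(* index of the real variable associated to a literal:
   w_j -> x_j, bar w_j -> x_{n+j} (0-based) *)
Definition lit_index (n : nat) (l : literal) : nat :=
  if lneg l then (n + lvar l)%nat else lvar l.

Definition h (y1 y2 : R) : R := 2 * y1 ^ 3 + y2 ^ 3 - 6 * y1 * y2 + 4.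

Definition in_Rgamma (gamma y1 y2 : R) : Prop :=
  1259 / 1000 - gamma <= y1 <= 126 / 100 /\ 1587 / 1000 <= y2 <= 159 / 100.

Definition in_D (n : nat) (s : R) (d : nat -> R) : Prop :=
  0 <= d 0%nat <= 1 / 2 /\
  (forall k : nat, (1 <= k < n)%nat -> 0 <= d k <= (d (k - 1)%nat) ^ 2) /\
  0 <= s <= (d (n - 1)%nat) ^ 2.

Definition sumsq (n : nat) (x : nat -> R) : R :=
  fold_right Rplus 0 (map (fun j => x j ^ 2) (seq 0 n)).

Definition feasible_S (n : nat) (cls : list clause) (x : nat -> R)
  (gamma Delta s y1 y2 : R) (d : nat -> R) : Prop :=
  (forall j : nat, (j < 2 * n)%nat -> -1 <= x j <= 1) /\
  (forall j : nat, (j < n)%nat -> x j + x (n + j)%nat = 0) /\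
  (forall c : clause, In c cls ->
     let '(a, b, e) := c in
     x (lit_index n a) + x (lit_index n b) + x (lit_index n e) >= -1 - Delta) /\
  0 <= gamma /\ 0 <= Delta <= 2 /\ Delta + gamma / 2 <= 2 /\
  in_Rgamma gamma y1 y2 /\
  in_D n s d /\
  - (INR n) ^ 5 * sumsq n x + h y1 y2 - s <= - (INR n) ^ 6.

(* Main.v *)
Require Import Defs.
From Stdlib Require Import Reals List Lra Lia.
Open Scope R_scope.

Lemma h_bound : forall y1 y2 g, 0<= g -> g <= 4 -> in_Rgamma g y1 y2 -> h y1 y2 >= -12.
Proof.
unfold in_Rgamma, h.
intros y1 y2 g H1 H2 [[H3 H4] [H5 H6]].
destruct (Rle_dec 0 y1).
- assert (0 <= y1*y1*y1) by (repeat apply Rmult_le_pos; lra).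
  assert (y1*y2 <= 126/100*(159/100)) by nra.
  assert (y2*y2*y2 >= 3) by nra. simpl. nra.
- assert (y2*y2*y2 >= 3) by nra.
  assert (-6*y1*y2 >= -6*y1*(1587/1000)) by nra.
  assert (y1 >= -2741/1000) by lra.
  assert (2*y1*y1*y1 - 6*y1*(1587/1000) + 19 >= 0) by nra.
  simpl. nra.
Qed.

Lemma fold_shift : forall l c, fold_right Rplus c l = c + fold_right Rplus 0 l.
Proof. induction l; intros; simpl; [lra| rewrite IHl; lra]. Qed.

Lemma sumsq_S : forall m x, sumsq (S m) x = sumsq m x + x m ^ 2.
Proof.
intros. unfold sumsq. rewrite seq_S, map_app, fold_right_app. simpl.
rewrite fold_shift. lra.
Qed.

Lemma sumsq_bound : forall n x, (forall i, (i < n)%nat -> -1 <= x i <= 1) ->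
  forall m, (m <= n)%nat ->
  sumsq m x <= INR m /\ (forall j, (j < m)%nat -> sumsq m x <= INR m - 1 + x j ^ 2).
Proof.
intros n x Hx. induction m; intros Hm.
- split. unfold sumsq; simpl; lra. intros; lia.
- destruct IHm as [A B]; [lia|]. rewrite sumsq_S, S_INR.
  assert (Hb := Hx m ltac:(lia)).
  assert (x m ^ 2 <= 1) by (simpl; nra).
  split. lra.
  intros j Hj. destruct (Nat.eq_dec j m).
  + subst. lra.
  + specialize (B j ltac:(lia)). lra.
Qed.

Lemma d_bound : forall n d, in_D n 0 d \/ True -> True.
Proof. auto. Qed.

Lemma d_bound2 : forall n s d, in_D n s d -> forall k, (k < n)%nat ->
  0 <= d k <= (/2) ^ (2 ^ k).
Proof.
intros n s d [H0 [H1 H2]]. induction k; intros Hk.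
- simpl. lra.
- destruct (IHk ltac:(lia)) as [A B].
  destruct (H1 (S k) ltac:(lia)) as [C D].
  replace (S k - 1)%nat with k in D by lia.
  split; [lra|].
  rewrite Nat.pow_succ_r', Nat.mul_comm, pow_mult.
  replace (((/2) ^ 2 ^ k) ^ 2) with ((/2) ^ 2 ^ k * ((/2) ^ 2 ^ k)) by (simpl; ring).
  replace (d k ^ 2) with (d k * d k) in D by (simpl; ring).
  assert (d k * d k <= (/2) ^ 2 ^ k * (/2) ^ 2 ^ k) by (apply Rmult_le_compat; lra).
  lra.
Qed.

Theorem mainTheorem3 :
  forall (n : nat) (cls : list clause),
    (1 <= n)%nat ->
    Forall (clause_ok n) cls ->
    forall (x : nat -> R) (gamma Delta s y1 y2 : R) (d : nat -> R),
      feasible_S n cls x gamma Delta s y1 y2 d ->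
      forall j : nat, (j < 2 * n)%nat ->
        Rabs (x j) >= 1 - 12 / (INR n) ^ 5
                        - (/ 2 ^ (Nat.pow 2 n)) / (INR n) ^ 5.
Proof.
intros n cls Hn _ x gamma Delta s y1 y2 d
  [Hx [Hneg [_ [Hg [HD [HDg [HR [HinD Hmain]]]]]]]] j Hj.
assert (Hh := h_bound y1 y2 gamma Hg ltac:(lra) HR).
set (e := / 2 ^ (2 ^ n)).
assert (Hs : s <= e).
{ destruct (d_bound2 n s d HinD (n-1) ltac:(lia)) as [A B].
  destruct HinD as [_ [_ [C D]]].
  unfold e. rewrite <- pow_inv.
  replace (2 ^ n)%nat with (2 * 2 ^ (n-1))%nat.
  2:{ replace n with (S (n-1)) at 2 by lia. rewrite Nat.pow_succ_r'. reflexivity. }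
  rewrite Nat.mul_comm, pow_mult.
  replace (((/2) ^ 2 ^ (n-1)) ^ 2) with ((/2) ^ 2 ^ (n-1) * ((/2) ^ 2 ^ (n-1))) by (simpl; ring).
  replace (d (n-1)%nat ^ 2) with (d (n-1)%nat * d (n-1)%nat) in D by (simpl; ring).
  assert (d (n-1)%nat * d (n-1)%nat <= (/2) ^ 2 ^ (n-1) * (/2) ^ 2 ^ (n-1))
    by (apply Rmult_le_compat; lra).
  lra. }
assert (HN : 0 < INR n) by (apply lt_0_INR; lia).
assert (HN5 : 0 < INR n ^ 5) by (apply pow_lt; lra).
assert (HN6 : INR n ^ 6 = INR n ^ 5 * INR n) by (simpl; ring).
assert (Hx' : forall i, (i < n)%nat -> -1 <= x i <= 1) by (intros; apply Hx; lia).
destruct (sumsq_bound n x Hx' n (le_n n)) as [_ B].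
assert (Key : forall k, (k < n)%nat -> x k ^ 2 >= 1 - 12 / INR n ^ 5 - e / INR n ^ 5).
{ intros k Hk. specialize (B k Hk).
  assert (INR n ^ 5 * sumsq n x >= INR n ^ 5 * INR n - 12 - e) by lra.
  assert (INR n ^ 5 * (x k ^ 2) >= INR n ^ 5 - 12 - e).
  { assert (INR n ^ 5 * sumsq n x <= INR n ^ 5 * (INR n - 1 + x k ^ 2))
      by (apply Rmult_le_compat_l; lra). nra. }
  unfold Rdiv.
  apply Rle_ge.
  apply (Rmult_le_reg_l (INR n ^ 5)); [lra|].
  replace (INR n ^ 5 * (1 - 12 * / INR n ^ 5 - e * / INR n ^ 5))
    with (INR n ^ 5 - 12 - e) by (field; lra).
  lra. }
assert (Habs : forall k, (k < n)%nat -> Rabs (x k) >= 1 - 12 / INR n ^ 5 - e / INR n ^ 5).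
{ intros k Hk. specialize (Key k Hk). specialize (Hx' k Hk).
  assert (x k ^ 2 = Rabs (x k) * Rabs (x k)).
  { rewrite <- Rabs_mult. simpl. rewrite Rmult_1_r. symmetry. apply Rabs_pos_eq. nra. }
  assert (Rabs (x k) <= 1) by (apply Rabs_le; lra).
  assert (0 <= Rabs (x k)) by apply Rabs_pos.
  nra. }
destruct (Nat.lt_ge_cases j n) as [Hjn|Hjn].
- apply Habs; exact Hjn.
- specialize (Hneg (j - n)%nat ltac:(lia)).
  replace (n + (j - n))%nat with j in Hneg by lia.
  replace (x j) with (- x (j - n)%nat) by lra.
  rewrite Rabs_Ropp. apply Habs. lia.
Qed.
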